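(* Let $x>0$ and $0\le p\le 1$. Then $$W_p(x,1)\le p(1-p)\left(\sqrt{x}-1\right)^2+L(x,1)\le A(x,1).$$ Equivalently (by homogeneity), for all $x,y>0$ and $0\le p\le 1$: $W_p(x,y)\le p(1-p)(\sqrt{x}-\sqrt{y})^2+L(x,y)\le A(x,y)$.
   Context: For $x,y>0$: $A(x,y)=\frac{x+y}{2}$; $L(x,y)=\frac{x-y}{\log x-\log y}$ for $x\ne y$ and $L(x,x)=x$ (logarithmic mean). The Wigner--Yanase--Dyson function is $W_p(x,y)=\frac{p(1-p)(x-y)^2}{(x^p-y^p)(x^{1-p}-y^{1-p})}$ for $x\neq y$, $p\notin\{0,1\}$, with $W_p(x,x)=x$, and for $p\in\{0,1\}$ defined by its limiting value $W_0(x,y)=W_1(x,y)=L(x,y)$. *)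

(* Defs.v *)
From Stdlib Require Import Reals.
Open Scope R_scope.

Definition A_mean (x y : R) : R := (x + y) / 2.

Definition L_mean (x y : R) : R :=
  if Req_EM_T x y then x else (x - y) / (ln x - ln y).

Definition W_fun (p x y : R) : R :=
  if Req_EM_T p 0 then L_mean x y
  else if Req_EM_T p 1 then L_mean x y
  else if Req_EM_T x y then x
  else p * (1 - p) * (x - y) ^ 2 /
       ((Rpower x p - Rpower y p) * (Rpower x (1 - p) - Rpower y (1 - p))).

(* Main.v *)
Require Import Defs.
From Stdlib Require Import Reals Lra Psatz.
From Coquelicot Require Import Coquelicot.
Open Scope R_scope.

Definition sh (t : R) := (exp t - exp (- t)) / 2.
Definition ch (t : R) := (exp t + exp (- t)) / 2.

Lemma sh_ch_u t : sh t = (exp t - / exp t)/2 /\ ch t = (exp t + / exp t)/2.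
Proof. unfold sh, ch; rewrite exp_Ropp; auto. Qed.

Lemma ch2 t : ch t ^ 2 = 1 + sh t ^ 2.
Proof. destruct (sh_ch_u t) as [-> ->]. assert (exp t > 0) by apply exp_pos. field. lra. Qed.

Lemma ch_pos t : 0 < ch t.
Proof. unfold ch. pose proof (exp_pos t); pose proof (exp_pos (-t)); lra. Qed.

Lemma sh_nonneg t : 0 <= t -> 0 <= sh t.
Proof. intros. unfold sh. destruct (Req_dec t 0). subst; rewrite Ropp_0; lra.
 assert (exp (-t) < exp t) by (apply exp_increasing; lra). lra. Qed.

Lemma sh_pos t : 0 < t -> 0 < sh t.
Proof. intros. unfold sh. assert (exp (-t) < exp t) by (apply exp_increasing; lra). lra. Qed.

Lemma sh_opp t : sh (-t) = - sh t.
Proof. unfold sh; rewrite Ropp_involutive; field. Qed.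
Lemma ch_opp t : ch (-t) = ch t.
Proof. unfold ch; rewrite Ropp_involutive; field. Qed.
Lemma sh0 : sh 0 = 0.
Proof. unfold sh; rewrite Ropp_0; field. Qed.

Lemma d_sh t : is_derive sh t (ch t).
Proof. unfold sh, ch. auto_derive; auto. field. Qed.
Lemma d_ch t : is_derive ch t (sh t).
Proof. unfold sh, ch. auto_derive; auto. field. Qed.

Lemma lemN x : 0 <= x -> x <= ch x * sh x.
Proof.
  intros Hx. destruct (Req_dec x 0) as [->|Hn].
  - rewrite sh0; lra.
  - destruct (MVT_cor2 (fun t => ch t * sh t - t) (fun t => sh t * sh t + ch t * ch t - 1) 0 x)
      as [c [Hc1 Hc2]]; [lra| |].
    + intros c _. apply is_derive_Reals. unfold sh, ch. auto_derive; auto. field.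
    + rewrite sh0 in Hc1. pose proof (ch2 c). assert (0 <= sh c ^2) by nra.
      assert (0 <= (sh c * sh c + ch c * ch c - 1) * (x - 0)) by (apply Rmult_le_pos; nra).
      lra.
Qed.

Lemma lemP a : 0 <= a -> sh a <= a * ch a.
Proof.
  intros Ha. destruct (Req_dec a 0) as [->|Hn].
  - rewrite sh0; lra.
  - destruct (MVT_cor2 (fun t => t * ch t - sh t) (fun t => t * sh t) 0 a)
      as [c [Hc1 Hc2]]; [lra| |].
    + intros c _. apply is_derive_Reals. unfold sh, ch. auto_derive; auto. field.
    + rewrite sh0 in Hc1. pose proof (sh_pos c ltac:(lra)).
      assert (0 <= (c * sh c) * (a - 0)) by (apply Rmult_le_pos; nra).
      lra.
Qed.

Lemma lemM t a : 0 <= t <= a -> t * sh a * ch t <= a * ch a * sh t.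
Proof.
  intros [H1 H2]. destruct (Req_dec t 0) as [->|Hn].
  - rewrite sh0. lra.
  destruct (Req_dec t a) as [->|Hn2].
  - lra.
  - destruct (MVT_cor2 (fun x => x * ch x / sh x) (fun x => (ch x * sh x - x) / (sh x)^2) t a)
      as [c [Hc1 Hc2]]; [lra| |].
    + intros c Hc. apply is_derive_Reals. pose proof (sh_pos c ltac:(lra)) as Hs.
      unfold sh, ch in *. auto_derive. lra. rewrite exp_Ropp in *. pose proof (exp_pos c). assert (exp c * (exp c - / exp c) > 0) by (apply Rmult_lt_0_compat; lra). replace (exp c * (exp c - / exp c)) with (exp c * exp c - 1) in H0 by (field; lra). field. lra.
    + pose proof (sh_pos c ltac:(lra)). pose proof (lemN c ltac:(lra)).
      pose proof (sh_pos t ltac:(lra)). pose proof (sh_pos a ltac:(lra)).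
      assert (0 <= (ch c * sh c - c) / sh c ^ 2 * (a - t)).
      { apply Rmult_le_pos; [|lra]. apply Rdiv_le_0_compat; [lra|]. nra. }
      assert (t * ch t / sh t <= a * ch a / sh a) by lra.
      assert (t * ch t / sh t * (sh t * sh a) <= a * ch a / sh a * (sh t * sh a))
        by (apply Rmult_le_compat_r; nra).
      replace (t * ch t / sh t * (sh t * sh a)) with (t * sh a * ch t) in H7 by (field; lra).
      replace (a * ch a / sh a * (sh t * sh a)) with (a * ch a * sh t) in H7 by (field; lra).
      lra.
Qed.

Lemma lemK b a : 0 <= b <= a ->
  0 <= a * ch a * (sh a ^ 2 - sh b ^ 2) - (a^2 - b^2) * sh a * ch b ^ 2.
Proof.
  intros [H1 H2]. destruct (Req_dec b a) as [->|Hn]. { nra. }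
  destruct (MVT_cor2 (fun t => a * ch a * (sh a ^ 2 - sh t ^ 2) - (a^2 - t^2) * sh a * ch t ^ 2)
     (fun t => 2 * ch t * (t * sh a * ch t - a * ch a * sh t - (a^2 - t^2) * sh a * sh t)) b a)
      as [c [Hc1 Hc2]]; [lra| |].
  - intros c Hc. apply is_derive_Reals. unfold sh, ch. auto_derive; auto. field.
  - pose proof (lemM c a ltac:(lra)). pose proof (ch_pos c).
    pose proof (sh_nonneg c ltac:(lra)). pose proof (sh_nonneg a ltac:(lra)).
    assert (0 <= (a^2 - c^2) * sh a * sh c).
    { apply Rmult_le_pos; [apply Rmult_le_pos|]; nra. }
    assert (2 * ch c * (c * sh a * ch c - a * ch a * sh c - (a ^ 2 - c ^ 2) * sh a * sh c) <= 0).
    { assert (0 <= 2 * ch c) by lra.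
      assert (c * sh a * ch c - a * ch a * sh c - (a ^ 2 - c ^ 2) * sh a * sh c <= 0) by lra.
      nra. }
    assert (0 <= a - b) by lra.
    assert (2 * ch c * (c * sh a * ch c - a * ch a * sh c - (a ^ 2 - c ^ 2) * sh a * sh c) * (a-b) <= 0) by nra.
    lra.
Qed.

Lemma lemK2 a b : Rabs b <= Rabs a ->
  0 <= a * sh a * ch a * (sh a ^ 2 - sh b ^ 2) - (a^2 - b^2) * sh a ^ 2 * ch b ^ 2.
Proof.
  intros Hab.
  assert (E : forall a b, 0 <= b <= a ->
     0 <= a * sh a * ch a * (sh a ^ 2 - sh b ^ 2) - (a^2 - b^2) * sh a ^ 2 * ch b ^ 2).
  { clear. intros a b Hb. pose proof (lemK b a Hb). pose proof (sh_nonneg a ltac:(lra)).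
    replace (a * sh a * ch a * (sh a ^ 2 - sh b ^ 2) - (a ^ 2 - b ^ 2) * sh a ^ 2 * ch b ^ 2)
      with (sh a * (a * ch a * (sh a ^ 2 - sh b ^ 2) - (a ^ 2 - b ^ 2) * sh a * ch b ^ 2)) by ring.
    apply Rmult_le_pos; lra. }
  assert (Hb : 0 <= Rabs b <= Rabs a) by (split; [apply Rabs_pos|lra]).
  pose proof (E _ _ Hb) as HE.
  destruct (Rcase_abs a); destruct (Rcase_abs b);
    [rewrite (Rabs_left a), (Rabs_left b) in HE by lra
    |rewrite (Rabs_left a), (Rabs_right b) in HE by lra
    |rewrite (Rabs_right a), (Rabs_left b) in HE by lra
    |rewrite (Rabs_right a), (Rabs_right b) in HE by lra];
    rewrite ?sh_opp, ?ch_opp in HE; nra.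
Qed.

Lemma lemP2 a : a * sh a * ch a <= a^2 * ch a ^ 2.
Proof.
  pose proof (ch_pos a). destruct (Rle_or_lt 0 a).
  - pose proof (lemP a H0). assert (0 <= a * ch a) by nra. nra.
  - pose proof (lemP (-a) ltac:(lra)). rewrite sh_opp, ch_opp in H1.
    assert (0 <= - a * ch a) by nra. nra.
Qed.

Section Setup.
Variables x y : R.
Hypothesis (Hx : 0 < x) (Hy : 0 < y).
Let al := ln x.
Let be := ln y.
Definition aa := (ln x - ln y) / 4.
Definition FF := exp ((ln x + ln y) / 4).

Lemma FF_pos : 0 < FF.
Proof. apply exp_pos. Qed.

Lemma x_repr : x = FF^2 * exp aa ^ 2.
Proof.
  rewrite <- (exp_ln x Hx) at 1. unfold FF, aa.
  simpl. rewrite !Rmult_1_r, <- !exp_plus. f_equal. field.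
Qed.
Lemma y_repr : y = FF^2 / exp aa ^ 2.
Proof.
  rewrite <- (exp_ln y Hy) at 1. unfold FF, aa. simpl. rewrite !Rmult_1_r.
  unfold Rdiv. rewrite Rinv_mult, <- !exp_Ropp, <- !exp_plus. f_equal. field.
Qed.
Lemma sx_repr : sqrt x = FF * exp aa.
Proof.
  rewrite x_repr. replace (FF ^ 2 * exp aa ^ 2) with ((FF * exp aa) * (FF * exp aa)) by ring.
  apply sqrt_square. pose proof FF_pos. pose proof (exp_pos aa). nra.
Qed.
Lemma sy_repr : sqrt y = FF / exp aa.
Proof.
  rewrite y_repr. pose proof (exp_pos aa). replace (FF ^ 2 / exp aa ^ 2) with ((FF / exp aa) * (FF / exp aa)) by (field; lra).
  apply sqrt_square. pose proof FF_pos. apply Rlt_le, Rdiv_lt_0_compat; lra.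
Qed.
Lemma ln_repr : ln x - ln y = 4 * aa.
Proof. unfold aa; field. Qed.

Lemma rp_xy p : Rpower x p * Rpower y (1 - p) = FF^2 * exp ((2*p-1)*aa) ^ 2.
Proof. unfold Rpower, FF, aa. simpl. rewrite !Rmult_1_r, <- !exp_plus. f_equal. field. Qed.
Lemma rp_yx p : Rpower y p * Rpower x (1 - p) = FF^2 / exp ((2*p-1)*aa) ^ 2.
Proof. unfold Rpower, FF, aa. simpl. rewrite !Rmult_1_r.
  unfold Rdiv. rewrite Rinv_mult, <- !exp_Ropp, <- !exp_plus. f_equal. field. Qed.
Lemma rp_xx p : Rpower x p * Rpower x (1 - p) = x.
Proof. unfold Rpower. rewrite <- exp_plus. rewrite <- (exp_ln x Hx) at 3. f_equal. ring. Qed.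
Lemma rp_yy p : Rpower y p * Rpower y (1 - p) = y.
Proof. unfold Rpower. rewrite <- exp_plus. rewrite <- (exp_ln y Hy) at 3. f_equal. ring. Qed.

End Setup.

Lemma aa_nz x y : 0 < x -> 0 < y -> x <> y -> aa x y <> 0.
Proof. intros Hx Hy Hn H. unfold aa in H. apply Hn. apply ln_inv; auto. lra. Qed.

Lemma main2 x y p : 0 < x -> 0 < y -> x <> y -> 0 <= p <= 1 ->
  p * (1 - p) * (sqrt x - sqrt y) ^ 2 + (x - y) / (ln x - ln y) <= (x + y) / 2.
Proof.
  intros Hx Hy Hn Hp.
  pose proof (aa_nz x y Hx Hy Hn) as Ha.
  rewrite (sx_repr x y Hx), (sy_repr x y Hy), (ln_repr x y).
  pose proof (x_repr x y Hx) as Ex. pose proof (y_repr x y Hy) as Ey.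
  pose proof (FF_pos x y) as HF.
  set (a := aa x y) in *. set (F := FF x y) in *. clearbody a F.
  rewrite Ex, Ey.
  pose proof (exp_pos a) as Hea.
  pose proof (lemP2 a) as HP. destruct (sh_ch_u a) as [Es Ec]. rewrite Es, Ec in HP.
  set (e := exp a) in *.
  assert (Hid : (F ^ 2 * e ^ 2 + F ^ 2 / e ^ 2) / 2 -
     (p * (1 - p) * (F * e - F / e) ^ 2 + (F ^ 2 * e ^ 2 - F ^ 2 / e ^ 2) / (4 * a))
     = F^2 * ((2*p-1)^2 * ((e - / e)/2)^2 + (a^2 * ((e + /e)/2)^2 - a * ((e - /e)/2) * ((e + /e)/2)) / a^2)).
  { field. lra. }
  assert (0 <= F^2 * ((2*p-1)^2 * ((e - / e)/2)^2 + (a^2 * ((e + /e)/2)^2 - a * ((e - /e)/2) * ((e + /e)/2)) / a^2)).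
  { apply Rmult_le_pos. apply pow2_ge_0. apply Rplus_le_le_0_compat.
    apply Rmult_le_pos; apply pow2_ge_0.
    apply Rdiv_le_0_compat. lra. apply pow2_gt_0; auto. }
  lra.
Qed.

Lemma main1 x y p : 0 < x -> 0 < y -> x <> y -> 0 < p < 1 ->
  p * (1 - p) * (x - y) ^ 2 / ((Rpower x p - Rpower y p) * (Rpower x (1 - p) - Rpower y (1 - p)))
  <= p * (1 - p) * (sqrt x - sqrt y) ^ 2 + (x - y) / (ln x - ln y).
Proof.
  intros Hx Hy Hn Hp.
  assert (HD : 0 < (Rpower x p - Rpower y p) * (Rpower x (1 - p) - Rpower y (1 - p))).
  { unfold Rpower. destruct (Rlt_or_le x y).
    - pose proof (ln_increasing x y Hx H).
      assert (exp (p * ln x) < exp (p * ln y)) by (apply exp_increasing; nra).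
      assert (exp ((1-p) * ln x) < exp ((1-p) * ln y)) by (apply exp_increasing; nra). nra.
    - assert (y < x) by lra. pose proof (ln_increasing y x Hy H0).
      assert (exp (p * ln y) < exp (p * ln x)) by (apply exp_increasing; nra).
      assert (exp ((1-p) * ln y) < exp ((1-p) * ln x)) by (apply exp_increasing; nra). nra. }
  apply Rle_div_l; auto.
  replace ((Rpower x p - Rpower y p) * (Rpower x (1 - p) - Rpower y (1 - p))) with
    (Rpower x p * Rpower x (1 - p) + Rpower y p * Rpower y (1 - p)
     - Rpower x p * Rpower y (1 - p) - Rpower y p * Rpower x (1 - p)) by ring.
  rewrite (rp_xx x Hx), (rp_yy y Hy), rp_xy, rp_yx.
  pose proof (aa_nz x y Hx Hy Hn) as Ha.
  rewrite (sx_repr x y Hx), (sy_repr x y Hy), (ln_repr x y).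
  pose proof (x_repr x y Hx) as Ex. pose proof (y_repr x y Hy) as Ey.
  pose proof (FF_pos x y) as HF.
  set (a := aa x y) in *. set (F := FF x y) in *. clearbody a F.
  rewrite Ex, Ey.
  pose proof (lemK2 a ((2*p-1)*a)) as HK.
  assert (Rabs ((2 * p - 1) * a) <= Rabs a).
  { rewrite Rabs_mult. assert (Rabs (2*p-1) <= 1) by (apply Rabs_le; lra).
    pose proof (Rabs_pos a). nra. }
  specialize (HK H). clear H.
  destruct (sh_ch_u a) as [Es Ec]. destruct (sh_ch_u ((2*p-1)*a)) as [Es2 Ec2].
  rewrite Es, Ec, Es2, Ec2 in HK.
  pose proof (exp_pos a). pose proof (exp_pos ((2*p-1)*a)).
  set (e := exp a) in *. set (f := exp ((2*p-1)*a)) in *. set (b := (2*p-1)*a) in *.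
  set (K := a * ((e - / e) / 2) * ((e + / e) / 2) * (((e - / e) / 2) ^ 2 - ((f - / f) / 2) ^ 2) -
       (a ^ 2 - b ^ 2) * ((e - / e) / 2) ^ 2 * ((f + / f) / 2) ^ 2) in HK.
  match goal with |- ?L <= ?R => assert (Hid : R - L = 4 * F^4 / a^2 * K) end.
  { unfold K, b. field. lra. }
  assert (0 <= 4 * F^4 / a^2 * K).
  { apply Rmult_le_pos; auto. apply Rdiv_le_0_compat; [|apply pow2_gt_0; auto]. nra. }
  lra.
Qed.

Lemma pp_nonneg p z : 0 <= p <= 1 -> 0 <= p * (1 - p) * z ^ 2.
Proof. intros. apply Rmult_le_pos; [nra| apply pow2_ge_0]. Qed.

Theorem theorem2p1 :
  forall x y p : R, 0 < x -> 0 < y -> 0 <= p <= 1 ->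
    W_fun p x y <= p * (1 - p) * (sqrt x - sqrt y) ^ 2 + L_mean x y /\
    p * (1 - p) * (sqrt x - sqrt y) ^ 2 + L_mean x y <= A_mean x y.
Proof.
  intros x y p Hx Hy Hp.
  pose proof (pp_nonneg p (sqrt x - sqrt y) Hp) as Hnn.
  split.
  - unfold W_fun.
    destruct (Req_EM_T p 0); [lra|].
    destruct (Req_EM_T p 1); [lra|].
    destruct (Req_EM_T x y) as [->|Hn].
    + unfold L_mean. destruct (Req_EM_T y y); [lra|congruence].
    + unfold L_mean. destruct (Req_EM_T x y); [congruence|].
      apply main1; auto; lra.
  - unfold L_mean, A_mean. destruct (Req_EM_T x y) as [->|Hn].
    + replace (sqrt y - sqrt y) with 0 by ring. lra.
    + apply main2; auto.
Qed.
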